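(* Let $k$ be a field and $Q$ a finitely generated commutative monoid. If $I_\ell\supsetneq\cdots\supsetneq I_0$ is a chain of distinct binomial ideals of $k[Q]$ all inducing the same congruence on $Q$, then $\ell\le1$. Moreover, if $\ell=1$ then $I_1$ contains monomials, $I_0$ contains none, and $I_0=I_1\cap\mathfrak a$ for some augmentation ideal $\mathfrak a$ compatible with $I_1$.
   Context: $k[Q]=\bigoplus_{q\in Q}k\,t^q$ with $t^pt^q=t^{p+q}$. A \emph{binomial ideal} is an ideal generated by elements $t^p-\lambda t^q$ with $\lambda\in k$ ($\lambda=0$ allowed). A binomial ideal $I$ \emph{induces} the congruence $\sim_I$ on $Q$: $p\sim_I q$ iff $t^p-\lambda t^q\in I$ for some $\lambda\in k^*$. An \emph{augmentation ideal compatible with} a binomial ideal $I$ is a proper ideal of the form $\mathfrak a=\langle t^q-\lambda_q: q\in Q\rangle$ with all $\lambda_q\in k^*$ such that $I\cap\mathfrak a$ is a binomial ideal. *)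

(* Defs.v *)
From HB Require Import structures.
From mathcomp Require Import all_boot all_order all_algebra.
Set Implicit Arguments. Unset Strict Implicit. Unset Printing Implicit Defensive.
Import GRing.Theory.
Local Open Scope ring_scope.

(* An element of k[Q] is represented by a finite
   formal sum  s : seq (k * Q)  standing for  \sum_(x <- s) x.1 t^(x.2);
   two representations denote the same element iff they have the same
   coefficient function [coef]. *)
Section MonoidAlgebra.
Variables (k : fieldType) (Q : nmodType).

Definition kQ := seq (k * Q).

Definition coef (s : kQ) (q : Q) : k := \sum_(x <- s | x.2 == q) x.1.

Definition kQ_eq (s s' : kQ) : Prop := forall q, coef s q = coef s' q.

Definition kQ_shift (c : k) (a : Q) (s : kQ) : kQ :=
  [seq (c * x.1, a + x.2) | x <- s].

Definition monomial (q : Q) : kQ := [:: (1, q)].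
Definition binom (p q : Q) (lam : k) : kQ := [:: (1, p); (- lam, q)].

(* a subset of k[Q] (given on representations, invariant under kQ_eq) *)
Definition kQset := kQ -> Prop.

Definition is_ideal (I : kQset) : Prop :=
  [/\ forall s s', kQ_eq s s' -> I s -> I s',
      I [::],
      forall s s', I s -> I s' -> I (s ++ s') &
      forall c a s, I s -> I (kQ_shift c a s)].

Definition proper_ideal (I : kQset) : Prop :=
  is_ideal I /\ ~ I (monomial 0).

Definition gen_ideal (G : kQset) : kQset :=
  fun s => forall J : kQset, is_ideal J -> (forall g, G g -> J g) -> J s.

Definition is_binomial (b : kQ) : Prop := exists p q lam, b = binom p q lam.

(* I is generated by binomials t^p - lam t^q (lam = 0 allowed) *)
Definition binomial_ideal (I : kQset) : Prop :=
  exists B : kQset, (forall b, B b -> is_binomial b) /\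
                    (forall s, I s <-> gen_ideal B s).

Definition induced_cong (I : kQset) (p q : Q) : Prop :=
  exists lam : k, lam != 0 /\ I (binom p q lam).

Definition set_cap (I J : kQset) : kQset := fun s => I s /\ J s.

Definition aug_ideal (lam : Q -> k) : kQset :=
  gen_ideal (fun b => exists q, b = binom q 0 (lam q)).

Definition compatible_aug (I a : kQset) : Prop :=
  exists lam : Q -> k, (forall q, lam q != 0) /\
    (forall s, a s <-> aug_ideal lam s) /\
    proper_ideal a /\ binomial_ideal (set_cap I a).

Definition strict_sub (I J : kQset) : Prop :=
  (forall s, I s -> J s) /\ exists s, J s /\ ~ I s.

End MonoidAlgebra.

Definition fin_gen_monoid (Q : nmodType) : Prop :=
  exists gens : seq Q, forall q : Q, exists m : seq nat,
    q = \sum_(i < size gens) nth 0 gens i *+ nth 0%N m i.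

(* Main.v *)
Require Import Defs.
From HB Require Import structures.
From mathcomp Require Import all_boot all_order all_algebra.
From mathcomp Require Import ring.
From Stdlib Require Import Classical ClassicalEpsilon.
Import GRing.Theory.
Local Open Scope ring_scope.
Set Implicit Arguments. Unset Strict Implicit. Unset Printing Implicit Defensive.

Lemma coef_cons (k : fieldType) (Q : nmodType) (x : k * Q) (s : kQ k Q) q :
  coef (x :: s) q = (if x.2 == q then x.1 else 0) + coef s q.
Proof. by rewrite /coef big_cons; case: (x.2 == q) => //; rewrite add0r. Qed.

Lemma coef_cat (k : fieldType) (Q : nmodType) (s s' : kQ k Q) q :
  coef (s ++ s') q = coef s q + coef s' q.
Proof. by rewrite /coef big_cat. Qed.

Lemma coef_nil (k : fieldType) (Q : nmodType) q : coef ([::] : kQ k Q) q = 0.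
Proof. by rewrite /coef big_nil. Qed.

Ltac kq := let q := fresh "q" in move=> q;
  rewrite ?coef_cat ?coef_cons ?coef_nil /=;
  repeat (match goal with |- context [(?x == q)] => case: (x == q) => /= end);
  ring.


Section L.
Variables (k : fieldType) (Q : nmodType).
Implicit Types (s : kQ k Q) (I J G : kQset k Q).

Lemma gen_is_ideal G : is_ideal (gen_ideal G).
Proof.
split.
- move=> s s' e hs J hJ hG; case: (hJ) => h1 _ _ _; exact: (h1 s s' e (hs J hJ hG)).
- by move=> J [_ h _ _] _.
- move=> s s' hs hs' J hJ hG; case: (hJ) => _ _ h _; exact: h (hs J hJ hG) (hs' J hJ hG).
- move=> c a s hs J hJ hG; case: (hJ) => _ _ _ h; exact: h (hs J hJ hG).
Qed.

Lemma iff_ideal I G : (forall s, I s <-> gen_ideal G s) -> is_ideal I.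
Proof.
move=> h; case: (gen_is_ideal G) => h1 h2 h3 h4; split.
- by move=> s s' e /h hs; apply/h; apply: h1 e hs.
- by apply/h.
- by move=> s s' /h hs /h hs'; apply/h; apply: h3.
- by move=> c a s /h hs; apply/h; apply: h4.
Qed.

Lemma I_eq I s s' : is_ideal I -> kQ_eq s s' -> I s -> I s'.
Proof. by case=> h _ _ _; apply: h. Qed.
Lemma I_nil I : is_ideal I -> I [::].
Proof. by case. Qed.
Lemma I_cat I s s' : is_ideal I -> I s -> I s' -> I (s ++ s').
Proof. by case=> _ _ h _; apply: h. Qed.
Lemma I_sh I c a s : is_ideal I -> I s -> I (kQ_shift c a s).
Proof. by case=> _ _ _ h; apply: h. Qed.

Lemma mon_of I (c : k) x : is_ideal I -> c != 0 -> I [:: (c, x)] -> I (monomial k x).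
Proof.
move=> hI c0 h; apply: (I_eq hI _ (I_sh (c^-1) 0 hI h)).
rewrite /kQ_shift /= add0r mulVf //; kq.
Qed.

Lemma mon_binom1 I x r : is_ideal I -> I (monomial k x) -> I (monomial k r) ->
  I (binom x r 1).
Proof.
move=> hI hx hr; apply: (I_eq hI _ (I_cat hI hx (I_sh (-1) 0 hI hr))).
rewrite /kQ_shift /= add0r; kq.
Qed.

Lemma lemM J I r q : is_ideal J -> is_ideal I -> (forall s, J s -> I s) ->
  (forall p q, induced_cong I p q -> induced_cong J p q) ->
  J (monomial k r) -> I (monomial k q) -> J (monomial k q).
Proof.
move=> hJ hI sub hc hr hq.
have [nu [nu0 hb]] := hc _ _ (ex_intro _ 1 (conj (oner_neq0 k) (mon_binom1 hI hq (sub _ hr)))).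
apply: (I_eq hJ _ (I_cat hJ hb (I_sh nu 0 hJ hr))).
rewrite /kQ_shift /= add0r; kq.
Qed.

Lemma sub_eq J I B : is_ideal J ->
  (forall s, I s <-> gen_ideal B s) -> (forall b, B b -> is_binomial b) ->
  (forall s, J s -> I s) ->
  (forall p q, induced_cong I p q -> induced_cong J p q) ->
  (exists r, J (monomial k r)) \/ (forall q, ~ I (monomial k q)) ->
  forall s, I s -> J s.
Proof.
move=> hJ hIB hB sub hc hd s /hIB hs; apply: hs => // b Bb.
have Ib : I b by apply/hIB => J' _ hG; exact: hG.
have hI := iff_ideal hIB.
have [p [q [lam eb]]] := hB b Bb; subst b.
have getJ : forall x, I (monomial k x) -> J (monomial k x).
  move=> x hx; case: hd => [[r hr]|hn]; last by case: (hn x).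
  exact: lemM hJ hI sub hc hr hx.
case: (eqVneq lam 0) => [l0|l0].
  subst lam.
  have hp : I (monomial k p) by apply: (I_eq hI _ Ib); kq.
  by apply: (I_eq hJ _ (getJ _ hp)); kq.
have [mu [mu0 hm]] := hc _ _ (ex_intro _ lam (conj l0 Ib)).
case: (eqVneq mu lam) => [<-//|ne].
have hq : I (monomial k q).
  apply: (mon_of (c := mu - lam)) => //; first by rewrite subr_eq0.
  apply: (I_eq hI _ (I_cat hI Ib (I_sh (-1) 0 hI (sub _ hm)))).
  rewrite /kQ_shift /= !add0r; kq.
apply: (I_eq hJ _ (I_cat hJ hm (I_sh (mu - lam) 0 hJ (getJ _ hq)))).
rewrite /kQ_shift /= add0r; kq.
Qed.


Definition eval (psi : Q -> k) s := \sum_(x <- s) x.1 * psi x.2.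

Lemma eval_coef psi s (U : seq Q) : uniq U -> (forall x, x \in s -> x.2 \in U) ->
  eval psi s = \sum_(q <- U) coef s q * psi q.
Proof.
move=> uU; elim: s => [|x s IH] hs.
  rewrite /eval big_nil big1 // => q _; by rewrite coef_nil mul0r.
rewrite /eval big_cons -/(eval psi s) IH; last by move=> y hy; apply: hs; rewrite inE hy orbT.
under [in RHS]eq_bigr => q _ do rewrite coef_cons mulrDl.
rewrite big_split /=; congr (_ + _).
rewrite (bigD1_seq x.2) //=; last by apply: hs; rewrite inE eqxx.
rewrite eqxx big1 ?addr0 // => q /negbTE; by rewrite eq_sym => ->; rewrite mul0r.
Qed.

Lemma eval_eq psi s s' : kQ_eq s s' -> eval psi s = eval psi s'.
Proof.
move=> e; set U := undup (map snd (s ++ s')).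
have uU : uniq U by apply: undup_uniq.
have h1 : forall x, x \in s -> x.2 \in U.
  by move=> x hx; rewrite mem_undup; apply: map_f; rewrite mem_cat hx.
have h2 : forall x, x \in s' -> x.2 \in U.
  by move=> x hx; rewrite mem_undup; apply: map_f; rewrite mem_cat hx orbT.
rewrite (eval_coef psi uU h1) (eval_coef psi uU h2).
by apply: eq_bigr => q _; rewrite e.
Qed.

Lemma eval_cat psi s s' : eval psi (s ++ s') = eval psi s + eval psi s'.
Proof. by rewrite /eval big_cat. Qed.

Lemma eval_ideal psi : psi 0 = 1 -> (forall a b, psi (a + b) = psi a * psi b) ->
  is_ideal (fun s => eval psi s = 0).
Proof.
move=> p0 pD; split.
- by move=> s s' e h; rewrite -(eval_eq psi e).
- by rewrite /eval big_nil.
- by move=> s s' h h'; rewrite eval_cat h h' addr0.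
- move=> c a s h; rewrite /eval /kQ_shift big_map /=.
  under eq_bigr => x _ do rewrite pD.
  transitivity (c * psi a * eval psi s); last by rewrite h mulr0.
  rewrite /eval big_distrr /=; apply: eq_bigr => x _; ring.
Qed.


Lemma part2 I0 I1 B0 B1 :
  (forall b, B0 b -> is_binomial b) ->
  (forall s, I0 s <-> gen_ideal B0 s) ->
  (forall b, B1 b -> is_binomial b) ->
  (forall s, I1 s <-> gen_ideal B1 s) ->
  (forall s, I0 s -> I1 s) ->
  (forall p q, induced_cong I1 p q -> induced_cong I0 p q) ->
  (forall q, ~ I0 (monomial k q)) ->
  forall r, I1 (monomial k r) ->
  exists a : kQset k Q, compatible_aug I1 a /\
        forall s, I0 s <-> (I1 s /\ a s).
Proof.
move=> hB0 hI0B hB1 hI1B sub c10 nomon r hr.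
have hI0 := iff_ideal hI0B; have hI1 := iff_ideal hI1B.
have uniqr : forall x rho rho', I0 (binom x r rho) -> I0 (binom x r rho') -> rho = rho'.
  move=> x rho rho' h h'; case: (eqVneq rho rho') => // ne; exfalso.
  apply: (nomon r); apply: (mon_of (c := rho' - rho)) => //; first by rewrite subr_eq0 eq_sym.
  apply: (I_eq hI0 _ (I_cat hI0 h (I_sh (-1) 0 hI0 h'))).
  rewrite /kQ_shift /= !add0r; kq.
have exmon : forall x, I1 (monomial k x) -> exists rho, rho != 0 /\ I0 (binom x r rho).
  move=> x hx; apply: c10; exists 1; split; first exact: oner_neq0.
  exact: mon_binom1.
have ex : forall a, exists rho, rho != 0 /\ I0 (binom (a + r) r rho).
  move=> a; apply: exmon; apply: (I_eq hI1 _ (I_sh 1 a hI1 hr)).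
  rewrite /kQ_shift /=; kq.
pose psi a := proj1_sig (constructive_indefinite_description _ (ex a)).
have hpsi : forall a, psi a != 0 /\ I0 (binom (a + r) r (psi a)).
  by move=> a; rewrite /psi; case: (constructive_indefinite_description _ _).
have psi0 : psi 0 = 1.
  apply: (uniqr r); first by rewrite -{1}(add0r r); exact: (hpsi 0).2.
  apply: (I_eq hI0 _ (I_nil hI0)); kq.
have psiD : forall a b, psi (a + b) = psi a * psi b.
  move=> a b; rewrite mulrC; apply: (uniqr (a + b + r)); first exact: (hpsi _).2.
  apply: (I_eq hI0 _ (I_cat hI0 (I_sh 1 a hI0 (hpsi b).2) (I_sh (psi b) 0 hI0 (hpsi a).2))).
  rewrite /kQ_shift /= !add0r addrA; kq.
have gpsi : forall p q lam, I0 (binom p q lam) -> psi p = lam * psi q.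
  move=> p q lam h; apply/eqP; rewrite -subr_eq0; apply/eqP.
  case: (eqVneq (psi p - lam * psi q) 0) => // ne; exfalso; apply: (nomon r).
  apply: (mon_of hI0 ne).
  apply: (I_eq hI0 _ (I_cat hI0 (I_sh 1 r hI0 h)
     (I_cat hI0 (I_sh (-1) 0 hI0 (hpsi p).2) (I_sh lam 0 hI0 (hpsi q).2)))).
  rewrite /kQ_shift /= !add0r [r + p]addrC [r + q]addrC; kq.
have hE := eval_ideal psi0 psiD.
pose a := aug_ideal psi.
have ha : is_ideal a := gen_is_ideal _.
have aE : forall s, a s -> eval psi s = 0.
  move=> s hs; apply: (hs _ hE) => g [q ->].
  by rewrite /eval !big_cons big_nil /= psi0; ring.
have I0a : forall s, I0 s -> a s.
  move=> s /hI0B hs; apply: hs => // b Bb.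
  have Ib : I0 b by apply/hI0B => J' _ hG; exact: hG.
  have [p [q [lam eb]]] := hB0 b Bb; subst b.
  have hp := gpsi _ _ _ Ib.
  have g1 : a (binom p 0 (psi p)) by move=> J _ hG; apply: hG; exists p.
  have g2 : a (binom q 0 (psi q)) by move=> J _ hG; apply: hG; exists q.
  apply: (I_eq ha _ (I_cat ha g1 (I_sh (-lam) 0 ha g2))).
  rewrite /kQ_shift /= !add0r hp; kq.
pose K := fun s => exists c, I0 (s ++ [:: (- c, r)]).
have hK : is_ideal K.
  split.
  - move=> s s' e [c hc]; exists c; apply: (I_eq hI0 _ hc).
    move=> q; by rewrite !coef_cat e.
  - exists 0; apply: (I_eq hI0 _ (I_nil hI0)); kq.
  - move=> s s' [c hc] [c' hc']; exists (c + c').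
    apply: (I_eq hI0 _ (I_cat hI0 hc hc')); kq.
  - move=> d x s [c hc]; exists (d * c * psi x).
    have h1 := I_sh d x hI0 hc.
    rewrite /kQ_shift map_cat /= -/(kQ_shift d x s) in h1.
    apply: (I_eq hI0 _ (I_cat hI0 h1 (I_sh (d * c) 0 hI0 (hpsi x).2))).
    rewrite /kQ_shift /= !add0r; kq.
have I1K : forall s, I1 s -> K s.
  move=> s /hI1B hs; apply: hs => // b Bb.
  have Ib : I1 b by apply/hI1B => J' _ hG; exact: hG.
  have [p [q [lam eb]]] := hB1 b Bb; subst b.
  case: (eqVneq lam 0) => [l0|l0].
    subst lam.
    have hp : I1 (monomial k p) by apply: (I_eq hI1 _ Ib); kq.
    have [rho [_ hrho]] := exmon _ hp.
    exists rho; apply: (I_eq hI0 _ hrho); kq.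
  have [mu [mu0 hm]] := c10 _ _ (ex_intro _ lam (conj l0 Ib)).
  case: (classic (I1 (monomial k q))) => hq.
    have [rho [_ hrho]] := exmon _ hq.
    exists ((mu - lam) * rho).
    apply: (I_eq hI0 _ (I_cat hI0 hm (I_sh (mu - lam) 0 hI0 hrho))).
    rewrite /kQ_shift /= !add0r; kq.
  case: (eqVneq mu lam) => [e|ne].
    subst mu; exists 0; apply: (I_eq hI0 _ hm); kq.
  exfalso; apply: hq; apply: (mon_of (c := mu - lam)) => //; first by rewrite subr_eq0.
  apply: (I_eq hI1 _ (I_cat hI1 Ib (I_sh (-1) 0 hI1 (sub _ hm)))).
  rewrite /kQ_shift /= !add0r; kq.
have main : forall s, I0 s <-> (I1 s /\ a s).
  move=> s; split; first by move=> h; split; [exact: sub | exact: I0a].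
  case=> h1 h2; have [c hc] := I1K _ h1.
  have e1 := aE _ (I0a _ hc); have e2 := aE _ h2.
  rewrite eval_cat e2 add0r /eval big_cons big_nil /= addr0 in e1.
  have c0 : c = 0.
    apply/eqP; move/eqP: e1; rewrite mulf_eq0 oppr_eq0 (negbTE (hpsi r).1) orbF //.
  subst c; apply: (I_eq hI0 _ hc); kq.
exists a; split => //.
exists psi; split; first by move=> q; exact: (hpsi q).1.
split; first by move=> s.
split.
  split => //; move=> /aE; rewrite /eval big_cons big_nil /= psi0 mul1r => /eqP.
  by rewrite addr0 oner_eq0.
exists B0; split => // s; split.
  by move=> h; apply/hI0B; apply/main.
by move=> /hI0B /main.
Qed.

End L.

Theorem theorem9p12 (k : fieldType) (Q : nmodType) (hQ : fin_gen_monoid Q)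
    (l : nat) (I : nat -> kQset k Q)
    (hbin : forall i, (i <= l)%N -> binomial_ideal (I i))
    (hchain : forall i, (i < l)%N -> strict_sub (I i) (I i.+1))
    (hcong : forall i, (i <= l)%N ->
       forall p q : Q, induced_cong (I i) p q <-> induced_cong (I 0%N) p q) :
  (l <= 1)%N /\
  (l = 1%N ->
     (exists q : Q, I 1%N (monomial k q)) /\
     (forall q : Q, ~ I 0%N (monomial k q)) /\
     (exists a : kQset k Q, compatible_aug (I 1%N) a /\
        forall s, I 0%N s <-> (I 1%N s /\ a s))).
Proof.
have c_ij : forall i j, (i <= l)%N -> (j <= l)%N -> forall p q,
    induced_cong (I i) p q -> induced_cong (I j) p q.
  by move=> i j hi hj p q /(hcong i hi p q) /(hcong j hj p q).
split.
  case: (leqP l 1) => // hl; exfalso.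
  have l1 : (1 <= l)%N by apply: ltnW.
  have [B0 [hB0 hI0]] := hbin 0%N isT.
  have [B1 [hB1 hI1]] := hbin 1%N l1.
  have [B2 [hB2 hI2]] := hbin 2%N hl.
  have [s01 [s [s1 ns0]]] := hchain 0%N (ltnW hl).
  have [s12 [s' [s2 ns1]]] := hchain 1%N hl.
  case: (classic (exists r, I 1%N (monomial k r))) => hm.
    apply: ns1; apply: (sub_eq (iff_ideal hI1) hI2 hB2 s12 _ (or_introl hm)) => //.
    exact: c_ij.
  apply: ns0; apply: (sub_eq (iff_ideal hI0) hI1 hB1 s01 _ (or_intror _)) => //.
    exact: c_ij.
  by move=> q hq; apply: hm; exists q.
move=> hl; subst l.
have [B0 [hB0 hI0]] := hbin 0%N isT.
have [B1 [hB1 hI1]] := hbin 1%N isT.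
have [s01 [s [s1 ns0]]] := hchain 0%N isT.
have c10 := c_ij 1%N 0%N isT isT.
have c01 := c_ij 0%N 1%N isT isT.
have mon1 : exists r, I 1%N (monomial k r).
  case: (classic (exists r, I 1%N (monomial k r))) => // hm; exfalso.
  apply: ns0; apply: (sub_eq (iff_ideal hI0) hI1 hB1 s01 c10 (or_intror _)) => //.
  by move=> q hq; apply: hm; exists q.
have mon0 : forall q, ~ I 0%N (monomial k q).
  move=> q hq; apply: ns0.
  apply: (sub_eq (iff_ideal hI0) hI1 hB1 s01 c10 (or_introl (ex_intro _ q hq))) => //.
split => //; split => //.
have [r hr] := mon1.
exact: (part2 hB0 hI0 hB1 hI1 s01 c10 mon0 hr).
Qed.
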